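(* Let $d_1<d_2<d_3$ be positive integers with $\gcd(d_1,d_2,d_3)=1$ forming a minimal generating set, and suppose $\mathsf S(d_1,d_2,d_3)$ is non-symmetric. Let $p(d_1,d_2,d_3)=\widetilde G(d_1,d_2,d_3)/C(d_1,d_2,d_3)$. Then $p(d_1,d_2,d_3)<1/2$, and moreover $p(d_1,d_2,d_3)=1/3$ if $(d_1,d_2,d_3)=(3,3k+1,3k+2)$ for some integer $k\ge1$, while $1/3<p(d_1,d_2,d_3)<1/2$ for every other such non-symmetric triple.
   Context: $\mathsf S(d_1,d_2,d_3)=\{c_1d_1+c_2d_2+c_3d_3: c_i\in\mathbb Z_{\ge0}\}$. The Frobenius number $F$ is the largest integer not in $\mathsf S$, the conductor is $C=F+1$, the genus $G$ is the number of positive integers not in $\mathsf S$, and $\widetilde G$ is the number of elements of $\mathsf S$ in $[0,F]$, so $G+\widetilde G=C$. The semigroup is symmetric if for every integer $s$: $s\in\mathsf S\iff F-s\notin\mathsf S$, and non-symmetric otherwise. *)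

(* Defs.v *)
From mathcomp Require Import all_boot all_order all_algebra.
Set Implicit Arguments. Unset Strict Implicit. Unset Printing Implicit Defensive.

(* Membership of s in S(d1,d2,d3) = { c1 d1 + c2 d2 + c3 d3 : ci >= 0 }.
   Boolean version: coefficients are bounded by s (for positive generators,
   c_i * d_i <= s forces c_i <= s). *)
Definition inS (d1 d2 d3 s : nat) : bool :=
  [exists c1 : 'I_s.+1, exists c2 : 'I_s.+1, exists c3 : 'I_s.+1,
     s == c1 * d1 + c2 * d2 + c3 * d3].

Definition inS2 (a b s : nat) : bool :=
  [exists c1 : 'I_s.+1, exists c2 : 'I_s.+1, s == c1 * a + c2 * b].

Definition minimal_gens (d1 d2 d3 : nat) : Prop :=
  ~~ inS2 d2 d3 d1 /\ ~~ inS2 d1 d3 d2 /\ ~~ inS2 d1 d2 d3.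

Definition is_frobenius (d1 d2 d3 : nat) (F : int) : Prop :=
  (forall s : nat, (F < s%:Z)%R -> inS d1 d2 d3 s) /\
  (0 <= F)%R /\ ~~ inS d1 d2 d3 `|F|%N.

Definition inSZ (d1 d2 d3 : nat) (s : int) : bool :=
  (0 <= s)%R && inS d1 d2 d3 `|s|%N.

Definition symmetric_sg (d1 d2 d3 : nat) (F : int) : Prop :=
  forall s : int, inSZ d1 d2 d3 s <-> ~~ inSZ d1 d2 d3 (F - s)%R.

Definition Gtilde (d1 d2 d3 F : nat) : nat :=
  count (inS d1 d2 d3) (iota 0 F.+1).

(* Main.v *)
Require Import Defs.
From mathcomp Require Import all_boot all_order all_algebra.
From mathcomp Require Import zify ring lra.
Set Implicit Arguments. Unset Strict Implicit. Unset Printing Implicit Defensive.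


Section Sg.
Variables m u v : nat.
Hypotheses (m0 : 0 < m) (u0 : 0 < u) (v0 : 0 < v).

Local Notation S := (inS m u v).

Lemma inSP s : reflect (exists c1 c2 c3, s = c1 * m + c2 * u + c3 * v) (S s).
Proof.
apply: (iffP existsP).
  case=> c1 /existsP [c2 /existsP [c3 /eqP ->]].
  by exists c1, c2, c3.
case=> c1 [c2 [c3 Hs]].
have h1 : c1 < s.+1 by rewrite ltnS Hs; nia.
have h2 : c2 < s.+1 by rewrite ltnS Hs; nia.
have h3 : c3 < s.+1 by rewrite ltnS Hs; nia.
exists (Ordinal h1); apply/existsP; exists (Ordinal h2); apply/existsP.
by exists (Ordinal h3); rewrite /= Hs.
Qed.

Lemma inS_comb c1 c2 c3 : S (c1 * m + c2 * u + c3 * v).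
Proof. by apply/inSP; exists c1, c2, c3. Qed.

Lemma inS0 : S 0.
Proof. by have := inS_comb 0 0 0. Qed.

Lemma inSD x y : S x -> S y -> S (x + y).
Proof.
move=> /inSP [a1 [a2 [a3 ->]]] /inSP [b1 [b2 [b3 ->]]].
apply/inSP; exists (a1 + b1), (a2 + b2), (a3 + b3); lia.
Qed.

Lemma inS_pos s : S s -> 0 < s -> m <= s \/ u <= s \/ v <= s.
Proof.
move=> /inSP [c1 [c2 [c3 ->]]] Hp.
case: c1 Hp => [|c1] Hp; last by left; nia.
case: c2 Hp => [|c2] Hp; last by right; left; nia.
case: c3 Hp => [|c3] Hp; last by right; right; nia.
by [].
Qed.

End Sg.

Lemma inS_swap m u v s : inS m u v s = inS m v u s.
Proof.
apply/existsP/existsP => -[c1 /existsP [c2 /existsP [c3 /eqP E]]];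
  exists c1; apply/existsP; exists c3; apply/existsP; exists c2; apply/eqP; lia.
Qed.


Section Grid.
Variables m u v : nat.
Hypotheses (m0 : 0 < m) (u0 : 0 < u) (v0 : 0 < v).

Local Notation S := (inS m u v).
Definition wg a b := a * u + b * v.
Definition inA a b := (wg a b < m) || ~~ S (wg a b - m).
Definition corner a b := [&& inA a b, ~~ inA a.+1 b & ~~ inA a b.+1].

Lemma notA_of a b k : wg a b = m + k -> S k -> ~~ inA a b.
Proof. by move=> E Hk; rewrite /inA E negb_or -leqNgt leq_addr addKn Hk. Qed.

Lemma notA_P a b : ~~ inA a b -> exists x y z, wg a b = m + (x * m + y * u + z * v).
Proof.
rewrite /inA negb_or -leqNgt negbK => /andP [H1 /(inSP m0 u0 v0) [x [y [z E]]]].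
by exists x, y, z; rewrite -E subnKC.
Qed.

Lemma notA_up a b a' b' : ~~ inA a b -> a <= a' -> b <= b' -> ~~ inA a' b'.
Proof.
move=> /notA_P [x [y [z E]]] ha hb.
apply: (@notA_of _ _ (x * m + (y + (a' - a)) * u + (z + (b' - b)) * v)).
  move: E; rewrite /wg; nia.
exact: inS_comb.
Qed.

Lemma inA_down a b a' b' : inA a' b' -> a <= a' -> b <= b' -> inA a b.
Proof.
move=> H ha hb; apply: contraLR H => H; exact: notA_up H ha hb.
Qed.

Lemma inA_w a b a' b' : wg a b = wg a' b' -> inA a b = inA a' b'.
Proof. by rewrite /inA => ->. Qed.

Lemma inA_bound a b : inA a b -> a < m /\ b < m.
Proof.
move=> H; split; rewrite ltnNge; apply/negP => Hle.
  have : ~~ inA m 0.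
    apply: (@notA_of _ _ ((u - 1) * m + 0 * u + 0 * v)); last exact: inS_comb.
    rewrite /wg; nia.
  by move/notA_up => /(_ a b Hle (leq0n _)); rewrite H.
have : ~~ inA 0 m.
  apply: (@notA_of _ _ ((v - 1) * m + 0 * u + 0 * v)); last exact: inS_comb.
  rewrite /wg; nia.
by move/notA_up => /(_ a b (leq0n _) Hle); rewrite H.
Qed.

Lemma inA00 : inA 0 0.
Proof. by rewrite /inA /wg /= m0. Qed.

Lemma right_rel a b b3 : corner a b -> inA a.+1 b3 ->
  exists beta X, [/\ b3 < beta, beta <= b, 0 < X & a.+1 * u + beta * v = X * m].
Proof.
case/and3P=> Hab Hr _ Hb3.
have [x [y [z E]]] := notA_P Hr.
move: E; rewrite /wg => E.
case: (posnP y) => [y0|ypos].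
  subst y.
  case: (leqP z b) => Hz.
    exists (b - z), x.+1; split => //.
    - rewrite ltnNge; apply/negP => Hle.
      have : ~~ inA a.+1 (b - z).
        apply: (@notA_of _ _ (x * m + 0 * u + 0 * v)); last exact: inS_comb.
        rewrite /wg; nia.
      by move/notA_up => /(_ a.+1 b3 (leqnn _) Hle); rewrite Hb3.
    - exact: leq_subr.
    - nia.
  have : ~~ inA a.+1 0.
    apply: (@notA_of _ _ (x * m + 0 * u + (z - b) * v)); last exact: inS_comb.
    rewrite /wg; nia.
  by move/notA_up => /(_ a.+1 b3 (leqnn _) (leq0n _)); rewrite Hb3.
case: (leqP y a.+1) => Hy.
  have : ~~ inA (a.+1 - y) b.
    apply: (@notA_of _ _ (x * m + 0 * u + z * v)); last exact: inS_comb.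
    rewrite /wg; nia.
  by move/notA_up => /(_ a b ltac:(lia) (leqnn _)); rewrite Hab.
have : ~~ inA 0 b.
  apply: (@notA_of _ _ (x * m + (y - a.+1) * u + z * v)); last exact: inS_comb.
  rewrite /wg; nia.
by move/notA_up => /(_ a b (leq0n _) (leqnn _)); rewrite Hab.
Qed.

End Grid.


Lemma inA_swap m u v a b : inA m u v a b = inA m v u b a.
Proof. by rewrite /inA /wg addnC inS_swap. Qed.

Lemma corner_swap m u v a b : corner m u v a b = corner m v u b a.
Proof.
rewrite /corner (inA_swap m u v a b) (inA_swap m u v a.+1 b) (inA_swap m u v a b.+1).
by case: (inA m v u b a); case: (inA m v u b a.+1); case: (inA m v u b.+1 a).
Qed.

Section Exch.
Variables m u v : nat.
Hypotheses (m0 : 0 < m) (u0 : 0 < u) (v0 : 0 < v).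
Local Notation S := (inS m u v).
Local Notation inA := (inA m u v).
Local Notation corner := (corner m u v).
Local Notation wg := (wg u v).

Lemma left_rel a b a1 : corner a b -> inA a1 b.+1 ->
  exists gam Y, [/\ a1 < gam, gam <= a, 0 < Y & gam * u + b.+1 * v = Y * m].
Proof.
rewrite corner_swap (inA_swap m u v a1 b.+1) => Hc H1.
have [g [Y [h1 h2 h3 h4]]] := right_rel m0 v0 u0 Hc H1.
by exists g, Y; split => //; rewrite addnC.
Qed.

Lemma exchange a b a1 b3 : corner a b -> inA a.+1 b3 -> inA a1 b.+1 ->
  exists c e, [/\ 0 < c, c <= a, 0 < e, e <= b & c * u = e * v].
Proof.
move=> Hc Hr Hl.
have [be [X [r1 r2 r3 r4]]] := right_rel m0 u0 v0 Hc Hr.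
have [ga [Y [l1 l2 l3 l4]]] := left_rel Hc Hl.
have Hab : inA a b by case/and3P: Hc.
have [A1 eA] : exists A1, a.+1 = ga + A1 by exists (a.+1 - ga); lia.
have [B1 eB] : exists B1, b.+1 = be + B1 by exists (b.+1 - be); lia.
rewrite eA mulnDl in r4; rewrite eB mulnDl in l4.
case: (ltngtP X Y) => HXY.
- have [D eD] : exists D, Y = X + D.+1 by exists (Y - X).-1; lia.
  rewrite eD mulnDl in l4.
  have : ~~ inA 0 B1.
    apply: (@notA_of _ _ _ _ _ (D * m + A1 * u + 0 * v)); last exact: inS_comb.
    rewrite /wg; lia.
  by move/(notA_up m0 u0 v0) => /(_ a b (leq0n _) ltac:(lia)); rewrite Hab.
- have [D eD] : exists D, X = Y + D.+1 by exists (X - Y).-1; lia.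
  rewrite eD mulnDl in r4.
  have : ~~ inA A1 0.
    apply: (@notA_of _ _ _ _ _ (D * m + 0 * u + B1 * v)); last exact: inS_comb.
    rewrite /wg; lia.
  by move/(notA_up m0 u0 v0) => /(_ a b ltac:(lia) (leq0n _)); rewrite Hab.
exists A1, B1; split; try lia.
Qed.

Lemma corner_shift a b c e : corner a b -> c <= a -> c * u = e * v ->
  corner (a - c) (b + e) /\ wg (a - c) (b + e) = wg a b.
Proof.
move=> /and3P [h1 h2 h3] hc E.
have W : wg (a - c) (b + e) = wg a b by rewrite /wg; nia.
split => //; apply/and3P; split.
- by rewrite (inA_w m W).
- have W' : wg (a - c).+1 (b + e) = wg a.+1 b by rewrite /wg; nia.
  by rewrite (inA_w m W').
- have W' : wg (a - c) (b + e).+1 = wg a b.+1 by rewrite /wg; nia.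
  by rewrite (inA_w m W').
Qed.

Lemma corner_col a b b' : corner a b -> corner a b' -> b = b'.
Proof.
move=> /and3P [h1 h2 h3] /and3P [h1' h2' h3'].
case: (ltngtP b b') => // H.
- by move: (inA_down m0 u0 v0 h1' (leqnn a) H); rewrite (negbTE h3).
- by move: (inA_down m0 u0 v0 h1 (leqnn a) H); rewrite (negbTE h3').
Qed.

Lemma corner_anti a b a' b' : corner a b -> corner a' b' -> a < a' -> b' < b.
Proof.
move=> /and3P [h1 h2 h3] /and3P [h1' h2' h3'] H.
rewrite ltnNge; apply/negP => Hb.
by move: (inA_down m0 u0 v0 h1' H Hb); rewrite (negbTE h2).
Qed.

Lemma corner_dom a b : inA a b -> exists a' b', [/\ a <= a', b <= b' & corner a' b'].
Proof.
move=> H.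
have [k Hk] : exists k, (m - a) + (m - b) <= k by exists ((m - a) + (m - b)).
elim: k a b H Hk => [|k IH] a b H Hk.
  have [ha hb] := inA_bound m0 u0 v0 H; lia.
case Hr: (inA a.+1 b).
  have [ha hb] := inA_bound m0 u0 v0 Hr.
  have [a' [b' [p1 p2 p3]]] := IH a.+1 b Hr ltac:(lia).
  by exists a', b'; split => //; lia.
case Hu: (inA a b.+1).
  have [ha hb] := inA_bound m0 u0 v0 Hu.
  have [a' [b' [p1 p2 p3]]] := IH a b.+1 Hu ltac:(lia).
  by exists a', b'; split => //; lia.
by exists a, b; split => //; apply/and3P; rewrite Hr Hu.
Qed.

End Exch.


Section Cover.
Variables m u v : nat.
Hypotheses (m0 : 0 < m) (u0 : 0 < u) (v0 : 0 < v).
Local Notation S := (inS m u v).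
Local Notation inA := (inA m u v).
Local Notation corner := (corner m u v).
Local Notation wg := (wg u v).

Lemma chain aL bL aR bR : corner aL bL -> (forall a b, corner a b -> aL <= a) ->
  corner aR bR -> (forall a b, corner a b -> a <= aR) ->
  forall a b, corner a b -> (a = aR /\ b = bR) \/ wg a b = wg aL bL.
Proof.
move=> cL minL cR maxR.
suff H : forall n a b, a <= n -> corner a b -> (a = aR /\ b = bR) \/ wg a b = wg aL bL.
  by move=> a b; apply: H (leqnn a).
elim=> [|n IH] a b Hn Hc.
- have := minL _ _ Hc; have := maxR _ _ Hc => h1 h2.
  case: (ltngtP a aR) => h3; last first.
    by left; split => //; subst a; apply: (corner_col m0 u0 v0 Hc cR).
    lia.
  have eL : a = aL by lia.
  by right; subst a; rewrite (corner_col m0 u0 v0 Hc cL).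
- case: (ltngtP a aR) => h3; last first.
    by left; split => //; subst a; apply: (corner_col m0 u0 v0 Hc cR).
    by have := maxR _ _ Hc; lia.
  have h2 := minL _ _ Hc.
  case: (ltngtP aL a) => h4; last first.
    by right; subst a; rewrite (corner_col m0 u0 v0 Hc cL).
    lia.
  have hbL := corner_anti m0 u0 v0 cL Hc h4.
  have Hr : inA a.+1 bR.
    by apply: (inA_down m0 u0 v0 (a' := aR) (b' := bR)) => //; case/and3P: cR.
  have Hl : inA aL b.+1.
    by apply: (inA_down m0 u0 v0 (a' := aL) (b' := bL)) => //; case/and3P: cL.
  have [c [e [c0 ca e0 eb E]]] := exchange m0 u0 v0 Hc Hr Hl.
  have [Hc' W] := corner_shift m0 u0 v0 Hc ca E.
  case: (IH (a - c) (b + e) ltac:(lia) Hc') => [[h5 _]|h5]; first lia.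
  by right; rewrite -W.
Qed.

Lemma gap_point g N : ~~ S g -> g <= N -> (forall s, N < s -> S s) ->
  exists a b k, [/\ inA a b, 0 < k & wg a b = g + k * m].
Proof.
move=> Hg HgN HF.
have exP : exists k, S (g + k * m) by exists N.+1; apply: HF; nia.
case: (ex_minnP exP) => k Hk mink.
have k0 : 0 < k by case: k Hk mink => [|k]; rewrite ?addn0 ?(negbTE Hg).
case/(inSP m0 u0 v0): Hk => c1 [c2 [c3 E]].
case: c1 E => [|c1] E.
  have Ew : wg c2 c3 = g + k * m by rewrite /wg E mul0n add0n.
  have HA : inA c2 c3.
    rewrite /inA; apply/orP; right.
    have E' : wg c2 c3 - m = g + k.-1 * m by rewrite Ew; nia.
    rewrite E'; apply/negP => H; have := mink _ H; lia.
  by exists c2, c3, k.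
have H : S (g + k.-1 * m).
  have E' : g + k.-1 * m = c1 * m + c2 * u + c3 * v by move: E; nia.
  by rewrite E' inS_comb.
have := mink _ H; lia.
Qed.

Lemma cover N : (forall s, N < s -> S s) -> ~~ S N ->
  exists f, [/\ f <= N, ~~ S f &
    forall g, g <= N -> ~~ S g -> S (N - g) \/ (g <= f /\ S (f - g))].
Proof.
move=> HF HN.
pose P a := [exists b : 'I_m, corner a b].
have PP a : reflect (exists b, corner a b) (P a).
  apply: (iffP existsP) => [[b Hb]|[b Hb]]; first by exists b.
  have [_ hb] : a < m /\ b < m by apply: (inA_bound m0 u0 v0); case/and3P: Hb.
  by exists (Ordinal hb).
have exP : exists a, P a.
  have [a [b [_ _ Hc]]] := corner_dom m0 u0 v0 (@inA00 m u v m0).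
  by exists a; apply/PP; exists b.
have bdP : forall a, P a -> a <= m.
  move=> a /PP [b Hb]; have [ha _] : a < m /\ b < m.
    by apply: (inA_bound m0 u0 v0); case/and3P: Hb.
  exact: ltnW.
case: (ex_minnP exP) => aL /PP [bL cL] minL.
case: (ex_maxnP exP bdP) => aR /PP [bR cR] maxR.
have minL' : forall a b, corner a b -> aL <= a by move=> a b Hc; apply: minL; apply/PP; exists b.
have maxR' : forall a b, corner a b -> a <= aR by move=> a b Hc; apply: maxR; apply/PP; exists b.
pose W1 := wg aL bL; pose W2 := wg aR bR.
have nS1 : m <= W1 -> ~~ S (W1 - m).
  by case/and3P: cL; rewrite /inA -/W1 => /orP [h|h] _ _ hm //; lia.
have nS2 : m <= W2 -> ~~ S (W2 - m).
  by case/and3P: cR; rewrite /inA -/W2 => /orP [h|h] _ _ hm //; lia.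
have cov : forall g, g <= N -> ~~ S g ->
    (g + m <= W1 /\ S (W1 - m - g)) \/ (g + m <= W2 /\ S (W2 - m - g)).
  move=> g hg Hg.
  have [a [b [k [HA k0 E]]]] := gap_point Hg hg HF.
  have [a' [b' [ha hb Hc]]] := corner_dom m0 u0 v0 HA.
  have Wd : wg a' b' = g + m + ((k.-1) * m + (a' - a) * u + (b' - b) * v).
    have [da eda] : exists da, a' = a + da by exists (a' - a); lia.
    have [db edb] : exists db, b' = b + db by exists (b' - b); lia.
    have [k' ek] : exists k', k = k'.+1 by exists k.-1; lia.
    move: E; rewrite /wg eda edb ek !mulnDl mulSn => E.
    have -> : a + da - a = da by lia.
    have -> : b + db - b = db by lia.
    rewrite /=; lia.
  have key : g + m <= wg a' b' /\ S (wg a' b' - m - g).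
    rewrite Wd; set X := (k.-1 * m + (a' - a) * u + (b' - b) * v).
    split; first exact: leq_addr.
    have -> : g + m + X - m - g = X by lia.
    exact: inS_comb.
  case: (chain cL minL' cR maxR' Hc) => [[e1 e2]|HW].
    by right; rewrite /W2 -e1 -e2.
  by left; rewrite /W1 -HW.
have gen : forall W1 W2 : nat, (m <= W1 -> ~~ S (W1 - m)) -> (m <= W2 -> ~~ S (W2 - m)) ->
    (forall g, g <= N -> ~~ S g ->
      (g + m <= W1 /\ S (W1 - m - g)) \/ (g + m <= W2 /\ S (W2 - m - g))) ->
    N + m <= W1 -> S (W1 - m - N) ->
    exists f, [/\ f <= N, ~~ S f &
      forall g, g <= N -> ~~ S g -> S (N - g) \/ (g <= f /\ S (f - g))].
  move=> V1 V2 n1 n2 cv h1 h2.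
  have eV1 : V1 - m = N.
    have := n1 ltac:(lia); case: (ltngtP (V1 - m) N) => h3 //; first lia.
    by rewrite HF.
  exists (if m <= V2 then V2 - m else N); split.
  - case: ifP => // h3; have := n2 h3; case: (leqP (V2 - m) N) => // h4.
    by rewrite HF.
  - by case: ifP => // h3; apply: n2.
  - move=> g hg Hg; case: (cv g hg Hg) => [[_ h3]|[h3 h4]].
      by left; rewrite -eV1.
    have hm : m <= V2 by lia.
    by right; rewrite hm; split => //; lia.
case: (cov N (leqnn N) HN) => [[h1 h2]|[h1 h2]].
  exact: (gen W1 W2).
apply: (gen W2 W1) => // g hg Hg; case: (cov g hg Hg); tauto.
Qed.

End Cover.


Lemma count_card (P : pred nat) k : count P (iota 0 k) = #|[set x : 'I_k | P x]|.
Proof.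
by rewrite -sum1dep_card -(big_mkord P (fun=> 1)) -sum1_count /index_iota subn0.
Qed.

Section Count.
Variables (S : pred nat) (N f : nat).
Hypotheses (S0 : S 0) (S1 : ~~ S 1) (Sadd : forall x y, S x -> S y -> S (x + y)) (HN : ~~ S N)
  (hf : f <= N) (Hf : ~~ S f)
  (Hcov : forall g, g <= N -> ~~ S g -> S (N - g) \/ (g <= f /\ S (f - g)))
  (Hns : exists s, [/\ s <= N, ~~ S s & ~~ S (N - s)]).

Let T := [set x : 'I_N.+1 | S x].
Let R1 := [set x : 'I_N.+1 | S (N - x)].
Let R2 := [set x : 'I_N.+1 | (x <= f) && S (f - x)].
Let Tf := [set x : 'I_N.+1 | S x && (x <= f)].

Let inR1 x : (x \in R1) = S (N - x). Proof. by rewrite inE. Qed.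

Lemma cR1 : #|R1| = #|T|.
Proof.
have -> : R1 = (@rev_ord N.+1) @^-1: T.
  by apply/setP => x; rewrite !inE /= subSS.
by rewrite card_preimset //; exact: (@rev_ord_inj N.+1).
Qed.

Lemma cR2 : #|R2| <= #|Tf|.
Proof.
pose h (x : 'I_N.+1) : 'I_N.+1 := inord (f - x).
apply: leq_trans (leq_imset_card h Tf).
apply: subset_leq_card; apply/subsetP => x; rewrite inE => /andP [hx Sx].
apply/imsetP; exists (inord (f - x) : 'I_N.+1).
  rewrite inE inordK; last lia.
  by rewrite Sx leq_subr.
apply: val_inj; rewrite /h /= !inordK; lia.
Qed.

Lemma cTf : #|Tf| <= #|T|.
Proof. by apply: subset_leq_card; apply/subsetP => x; rewrite !inE => /andP []. Qed.

Lemma covS : ~: T \subset R1 :|: R2.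
Proof.
apply/subsetP => x; rewrite !inE => Hx.
have := Hcov (ltn_ord x) Hx; case=> [->//|[-> ->]]; by rewrite orbT.
Qed.

Lemma R1gap : R1 \subset ~: T.
Proof.
apply/subsetP => x; rewrite !inE => Hx; apply/negP => Sx.
have := Sadd Sx Hx; rewrite subnKC ?(negbTE HN) //; exact: ltn_ord x.
Qed.

Lemma cC : #|~: T| = N.+1 - #|T|.
Proof. by rewrite (cardsCs (~: T)) setCK card_ord. Qed.

Lemma half_lt : 2 * #|T| < N.+1.
Proof.
case: Hns => s [hs Ss Ss'].
pose s0 : 'I_N.+1 := inord s.
have e0 : (s0 : nat) = s by rewrite /s0 inordK.
have : #|s0 |: R1| <= #|~: T|.
  apply: subset_leq_card; apply/subsetP => x; rewrite !inE => /orP [/eqP ->|Hx].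
    by rewrite e0.
  by have := subsetP R1gap x; rewrite !inE; apply.
rewrite cardsU1 inR1 e0 (negbTE Ss') cR1 cC /=.
have : #|T| <= N.+1 by have := max_card T; rewrite card_ord.
lia.
Qed.

Lemma third_le : N.+1 <= 3 * #|T|.
Proof.
have h1 := subset_leq_card covS.
have h2 := cardsUI R1 R2.
have h3 := cR1; have h4 := cR2; have h5 := cTf; have h6 := cC.
have : #|T| <= N.+1 by have := max_card T; rewrite card_ord.
lia.
Qed.

Lemma third_eq : N.+1 = 3 * #|T| -> forall x, x <= N -> S x = (3 %| x).
Proof.
move=> E.
have h1 := subset_leq_card covS.
have h2 := cardsUI R1 R2.
have h3 := cR1; have h4 := cR2; have h5 := cTf; have h6 := cC.
have hT : #|T| <= N.+1 by have := max_card T; rewrite card_ord.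
have I0 : R1 :&: R2 = set0 by apply: cards0_eq; lia.
have eTf : #|Tf| = #|T| by lia.
have TfT : Tf =i T by apply/(subset_cardP eTf); apply/subsetP => x; rewrite !inE => /andP [].
have disj : forall x, x <= N -> S (N - x) -> x <= f -> S (f - x) -> False.
  move=> x hx h1' h2' h3'.
  have : (inord x : 'I_N.+1) \in R1 :&: R2 by rewrite !inE !inordK ?h1' ?h2' ?h3' //; lia.
  by rewrite I0 inE.
have lef : forall x, x <= N -> S x -> x < f.
  move=> x hx Sx.
  have : (inord x : 'I_N.+1) \in Tf by rewrite TfT inE inordK //; lia.
  rewrite inE inordK; last lia.
  case/andP=> _ h; rewrite ltn_neqAle h andbT; apply/eqP => ex.
  by move: Hf; rewrite -ex Sx.
have noSS : forall x, x <= N -> S x -> S (N - x) -> False.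
  move=> x hx h h'; have := Sadd h h'; rewrite subnKC //; by rewrite (negbTE HN).
have noSR2 : forall x, x <= f -> S x -> S (f - x) -> False.
  move=> x hx h h'; have := Sadd h h'; rewrite subnKC //; by rewrite (negbTE Hf).
have fN : f < N.
  rewrite ltn_neqAle hf andbT; apply/eqP => ef.
  by apply: (disj N (leqnn N)); rewrite ?ef ?subnn.
pose r2 x := (x <= f) && S (f - x).
have r2E : forall x, x <= N -> r2 x = ~~ S x && ~~ S (N - x).
  move=> x hx; rewrite /r2.
  case Sx: (S x) => /=.
    by apply/negbTE/negP => /andP [h h']; apply: (noSR2 _ h Sx h').
  case SNx: (S (N - x)) => /=.
    by apply/negbTE/negP => /andP [h h']; apply: (disj _ hx SNx h h').
  by case: (Hcov hx (negbT Sx)) => [h|[h h']]; [rewrite h in SNx | rewrite h h'].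
have r2sym : forall x, x <= N -> r2 x = r2 (N - x).
  move=> x hx; rewrite r2E // r2E ?leq_subr // subKn //; by rewrite andbC.
have r21 : r2 1.
  rewrite r2E; last lia.
  rewrite S1 /=; apply/negP => h; have := lef (N - 1) (leq_subr _ _) h; lia.
have ef : f = N - 1.
  move: r21; rewrite r2sym; last lia.
  by case/andP => h _; lia.
have r2E2 : forall x, x <= N -> r2 x = (1 <= x) && S (x - 1).
  move=> x hx; rewrite r2sym // /r2 ef.
  case: x hx => [|x] hx.
    by rewrite subn0 /=; apply/negbTE/nandP; left; rewrite -ltnNge; lia.
  have -> : N - x.+1 <= N - 1 by lia.
  have -> : N - 1 - (N - x.+1) = x by lia.
  by rewrite subSS subn0.
have R1E : forall x, x <= N -> S (N - x) = (2 <= x) && S (x - 2).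
  move=> x hx; case: x hx => [|x] hx; first by rewrite subn0 (negbTE HN).
  have := r2E2 x ltac:(lia); rewrite /r2 ef.
  have -> : x <= N - 1 by lia.
  have -> : N - 1 - x = N - x.+1 by lia.
  move=> /= ->; case: x hx => [|x] hx //=.
have one : forall x, x <= N -> [|| S x, (1 <= x) && S (x - 1) | (2 <= x) && S (x - 2)].
  move=> x hx; case Sx: (S x) => //=.
  case: (Hcov hx (negbT Sx)) => [h|h].
    by rewrite R1E // in h; rewrite h orbT.
  have : r2 x by rewrite /r2; case: h => -> ->.
  by rewrite r2E2 // => ->.
have excl1 : forall x, x <= N -> S x -> ~~ ((1 <= x) && S (x - 1)).
  by move=> x hx Sx; rewrite -r2E2 // r2E // Sx.
have excl2 : forall x, x <= N -> S x -> ~~ ((2 <= x) && S (x - 2)).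
  move=> x hx Sx; rewrite -R1E //; apply/negP => h; exact: noSS _ hx Sx h.
have excl12 : forall x, x <= N -> (1 <= x) && S (x - 1) -> ~~ ((2 <= x) && S (x - 2)).
  move=> x hx; rewrite -r2E2 // r2E // -R1E //.
  by case/andP => _ ->.
elim/ltn_ind => x IH hx.
case: x IH hx => [|x] IH hx; first by rewrite S0.
case: x IH hx => [|x] IH hx; first by rewrite (negbTE S1).
case: x IH hx => [|x] IH hx.
  have := excl2 _ hx; rewrite /= subn2 /= S0 => h; apply/negbTE/negP => h'.
  by have := h h'.
have ex1 := IH x.+2 (ltnSn _) ltac:(lia).
have ex2 := IH x.+1 ltac:(lia) ltac:(lia).
have ex3 := IH x ltac:(lia) ltac:(lia).
have h1' := one _ hx; have h2' := excl1 _ hx; have h3' := excl2 _ hx; have h4' := excl12 _ hx.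
move: h1' h2' h3' h4'; rewrite !subSS !subn0 /= ex1 ex2 /dvdn.
case: (S x.+3); case: (x.+1 %% 3 =P 0); case: (x.+2 %% 3 =P 0);
  case: (x.+3 %% 3 =P 0) => //=; lia.
Qed.

End Count.


Lemma inS2_intro a b s c1 c2 : s = c1 * a + c2 * b -> c1 <= s -> c2 <= s -> inS2 a b s.
Proof.
move=> E h1 h2; apply/existsP; exists (Ordinal (h1 : c1 < s.+1)); apply/existsP.
by exists (Ordinal (h2 : c2 < s.+1)); rewrite /= E.
Qed.

Lemma count3 k : count (fun x => 3 %| x) (iota 0 (3 * k)) = k.
Proof.
elim: k => [//|k IH].
rewrite mulnSr iotaD count_cat IH add0n /=.
have h0 : 3 %| 3 * k by rewrite dvdn_mulr.
have h1 : ~~ (3 %| (3 * k).+1) by rewrite -[(3 * k).+1]addn1 dvdn_addr ?dvdn_mulr.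
have h2 : ~~ (3 %| (3 * k).+2) by rewrite -[(3 * k).+2]addn2 dvdn_addr ?dvdn_mulr.
by rewrite h0 (negbTE h1) (negbTE h2) addn0 addn1.
Qed.

Lemma fam_small k x : x < 3 * k -> inS 3 (3 * k + 1) (3 * k + 2) x = (3 %| x).
Proof.
move=> hx; have h3 : 0 < 3 by [].
have h4 : 0 < 3 * k + 1 by lia.
have h5 : 0 < 3 * k + 2 by lia.
apply/(inSP h3 h4 h5)/idP.
  case=> c1 [c2 [c3 E]].
  have c20 : c2 = 0 by nia.
  have c30 : c3 = 0 by nia.
  by rewrite E c20 c30 !mul0n !addn0 dvdn_mull.
move=> /dvdnP [q ->]; by exists q, 0, 0; rewrite !mul0n !addn0.
Qed.

Lemma fam_big k x : 1 <= k -> 3 * k <= x -> inS 3 (3 * k + 1) (3 * k + 2) x.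
Proof.
move=> hk hx; have h3 : 0 < 3 by [].
have h4 : 0 < 3 * k + 1 by lia.
have h5 : 0 < 3 * k + 2 by lia.
apply/(inSP h3 h4 h5).
have E := divn_eq x 3.
have hr : x %% 3 < 3 by rewrite ltn_mod.
have hq : k <= x %/ 3 by rewrite leq_divRL // mulnC.
case: (x %% 3) E hr => [|[|[|r]]] E hr //.
- by exists (x %/ 3), 0, 0; rewrite E; lia.
- by exists (x %/ 3 - k), 1, 0; rewrite E; nia.
- by exists (x %/ 3 - k), 0, 1; rewrite E; nia.
Qed.

Section Main.
Variables d1 d2 d3 N : nat.
Hypotheses (d10 : 0 < d1) (d12 : d1 < d2) (d23 : d2 < d3).
Hypothesis Hmin : minimal_gens d1 d2 d3.
Hypothesis HF : forall s, N < s -> inS d1 d2 d3 s.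
Hypothesis HN : ~~ inS d1 d2 d3 N.

Let d20 : 0 < d2. Proof. lia. Qed.
Let d30 : 0 < d3. Proof. lia. Qed.
Local Notation S := (inS d1 d2 d3).

Lemma d1_2 : 1 < d1.
Proof.
case: Hmin => _ [H2 _].
rewrite ltn_neqAle d10 andbT; apply/eqP => e1.
move/negP: H2; apply; apply: (@inS2_intro _ _ _ d2 0); rewrite -?e1; lia.
Qed.

Lemma S1 : ~~ S 1.
Proof. apply/negP => h; have := inS_pos d10 d20 d30 h isT; have := d1_2; lia. Qed.

Lemma Sadd x y : S x -> S y -> S (x + y).
Proof. exact: inSD. Qed.

Lemma Sz : S 0.
Proof. exact: inS0. Qed.

Lemma eq_family : N.+1 = 3 * #|[set x : 'I_N.+1 | S x]| ->
  exists k, [/\ 1 <= k, d1 = 3, d2 = 3 * k + 1 & d3 = 3 * k + 2].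
Proof.
move=> E.
have [f [hf Hf Hcov]] := cover d10 d20 d30 HF HN.
have T3 := third_eq Sz S1 Sadd HN hf Hf Hcov E.
set n := #|_| in E.
have n0 : 0 < n by lia.
have Sd1 : S d1 by have := inS_comb d10 d20 d30 1 0 0; rewrite mul1n !mul0n !addn0.
have Sd2 : S d2 by have := inS_comb d10 d20 d30 0 1 0; rewrite mul1n !mul0n addn0 add0n.
have Sd3 : S d3 by have := inS_comb d10 d20 d30 0 0 1; rewrite mul1n !mul0n !add0n.
have S3 : S 3.
  case: (leqP 3 N) => h3; first by rewrite T3.
  by apply: HF.
have e1 : d1 = 3.
  have := inS_pos d10 d20 d30 S3 isT => hle.
  case: (leqP d1 N) => h.
    have := T3 _ h; rewrite Sd1 => /esym /dvdnP [q eq].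
    have := d1_2; lia.
  lia.
case: Hmin => H1 [H2 H3].
have nd2 : ~~ (3 %| d2).
  apply/negP => /dvdnP [q eq]; move/negP: H2; apply.
  by apply: (@inS2_intro _ _ _ q 0); rewrite ?e1; lia.
have nd3 : ~~ (3 %| d3).
  apply/negP => /dvdnP [q eq]; move/negP: H3; apply.
  by apply: (@inS2_intro _ _ _ q 0); rewrite ?e1; lia.
have bd2 : N < d2.
  rewrite ltnNge; apply/negP => h; have := T3 _ h; rewrite Sd2 => he.
  by rewrite -he in nd2.
have bd3 : N < d3 by lia.
have d2v : d2 = 3 * n + 1.
  have h : S (3 * n + 1) by apply: HF; lia.
  case/(inSP d10 d20 d30): h => c1 [c2 [c3 Eq]].
  have hd2 : d2 <= 3 * n + 1.
    case: c2 Eq => [|c2] Eq; last by nia.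
    case: c3 Eq => [|c3] Eq; last by nia.
    exfalso; move: Eq; rewrite e1; lia.
  have hne : d2 != 3 * n by apply: contraNneq nd2 => ->; rewrite dvdn_mulr.
  lia.
have d3v : d3 = 3 * n + 2.
  have h : S (3 * n + 2) by apply: HF; lia.
  case/(inSP d10 d20 d30): h => c1 [c2 [c3 Eq]].
  case: c3 Eq => [|c3] Eq.
    exfalso; rewrite e1 d2v in Eq.
    case: c2 Eq => [|[|c2]] Eq; lia.
  have : 3 * n + 2 >= d3 by nia.
  lia.
by exists n; split.
Qed.

End Main.

Import Order.TTheory GRing.Theory Num.Theory.
Unset Implicit Arguments.

Theorem mainTheorem3 (d1 d2 d3 : nat) (F : int) :
  (0 < d1)%N -> (d1 < d2)%N -> (d2 < d3)%N ->
  gcdn (gcdn d1 d2) d3 = 1%N ->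
  minimal_gens d1 d2 d3 ->
  is_frobenius d1 d2 d3 F ->
  ~ symmetric_sg d1 d2 d3 F ->
  let C := `|F|%N.+1 in
  let p : rat := ((Gtilde d1 d2 d3 `|F|%N)%:R / C%:R)%R in
  (p < 1 / 2)%R /\
  ((exists k : nat, (1 <= k)%N /\ d1 = 3%N /\ d2 = (3 * k + 1)%N /\ d3 = (3 * k + 2)%N) ->
     p = 1 / 3)%R /\
  (~ (exists k : nat, (1 <= k)%N /\ d1 = 3%N /\ d2 = (3 * k + 1)%N /\ d3 = (3 * k + 2)%N) ->
     (1 / 3 < p)%R /\ (p < 1 / 2)%R).
Proof.
move=> d10 d12 d23 _ Hmin [HF [F0 HN]] Hsym C p.
rewrite /p /C {p C}.
case: F HF F0 HN Hsym => [N|n] HF F0 HN Hsym; last by move: F0; rewrite NegzE oppr_ge0 lez_nat.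
rewrite /=.
have d20 : (0 < d2)%N by lia.
have d30 : (0 < d3)%N by lia.
have HF' : forall s, (N < s)%N -> inS d1 d2 d3 s by move=> s h; apply: HF; rewrite ltz_nat.
have HN' : ~~ inS d1 d2 d3 N by [].
have S1' : ~~ inS d1 d2 d3 1 := S1 d10 d12 d23 Hmin HN'.
have Sz' : inS d1 d2 d3 0 := Sz d10 d12 d23 HN'.
have Sadd' : forall x y, inS d1 d2 d3 x -> inS d1 d2 d3 y -> inS d1 d2 d3 (x + y).
  by move=> x y; apply: (Sadd d10 d12 d23 HN').
have Hns : exists s, [/\ (s <= N)%N, ~~ inS d1 d2 d3 s & ~~ inS d1 d2 d3 (N - s)].
  case: (boolP [exists s : 'I_N.+1, ~~ inS d1 d2 d3 s && ~~ inS d1 d2 d3 (N - s)]).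
    by case/existsP => s /andP [h1 h2]; exists s; split => //; rewrite -ltnS.
  move/existsPn => H; exfalso; apply: Hsym => s.
  have Hk : forall k, (k <= N)%N -> inS d1 d2 d3 k || inS d1 d2 d3 (N - k).
    move=> k hk; have := H (Ordinal (hk : (k < N.+1)%N)); by rewrite /= negb_and !negbK.
  rewrite /inSZ.
  case: s => k.
  - case: (leqP k N) => hk.
      rewrite subzn //=.
      split.
        move=> h; apply/negP => h'; have := Sadd' _ _ h h'.
        by rewrite subnKC // (negbTE HN').
      by move/negbTE => h; have := Hk k hk; rewrite h orbF.
    have -> : (0 <= N%:Z - k%:Z)%R = false.
      by apply/negbTE; rewrite -ltNge subr_lt0 ltz_nat.
    by rewrite /= HF'.
  - rewrite NegzE opprK -PoszD /= HF' //; lia.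
have [f [hf Hf Hcov]] := cover d10 d20 d30 HF' HN'.
have hl := half_lt Sz' S1' Sadd' HN' hf Hf Hns.
have tl := third_le Sz' S1' HN' hf Hf Hcov.
have EF : N.+1 = 3 * #|[set x : 'I_N.+1 | inS d1 d2 d3 x]| ->
    exists k, [/\ (1 <= k)%N, d1 = 3, d2 = 3 * k + 1 & d3 = 3 * k + 2].
  exact: (eq_family d10 d12 d23 Hmin HF' HN').
rewrite /Gtilde count_card.
set n := #|_| in hl tl EF *.
have b0 : ((0 : rat) < N.+1%:R)%R by rewrite ltr0n.
have half : ((n%:R / N.+1%:R : rat) < 1 / 2)%R.
  rewrite ltr_pdivrMr //.
  have : ((n%:R * 2 : rat) < N.+1%:R)%R by rewrite -natrM ltr_nat mulnC.
  lra.
split => //; split.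
  case=> k [hk [e1 [e2 e3]]].
  have eN : N.+1 = 3 * k.
    have h1 : (N < 3 * k)%N.
      rewrite ltnNge; apply/negP => h; move: HN'.
      by rewrite e1 e2 e3 fam_big.
    have h2 : (3 * k - 1 <= N)%N.
      rewrite leqNgt; apply/negP => h; have := HF' _ h.
      rewrite e1 e2 e3 fam_small; last lia.
      rewrite /dvdn; lia.
    lia.
  have en : n = k.
    rewrite /n -(count_card (inS d1 d2 d3)) eN -[RHS](count3 k).
    apply: eq_in_count => x; rewrite mem_iota => /andP [_ hx].
    rewrite e1 e2 e3 fam_small //.
  have hN : N.+1 = 3 * n by rewrite en.
  have n0 : (n%:R : rat) != 0%R by rewrite pnatr_eq0 -lt0n; lia.
  rewrite hN natrM; field; by rewrite n0.
move=> nfam; split => //.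
have lt3 : (N.+1 < 3 * n)%N.
  rewrite ltn_neqAle tl andbT; apply/eqP => e.
  by apply: nfam; have [k [h1 h2 h3 h4]] := EF e; exists k.
rewrite ltr_pdivlMr //.
have : ((N.+1%:R : rat) < n%:R * 3)%R by rewrite -natrM ltr_nat mulnC.
lra.
Qed.
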